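(* Let $\sigma\in\{+1,-1\}$ and consider the ODE $$(a^2-1)Q''(a)+\Big(\tfrac83a-\tfrac2a\Big)Q'(a)+\tfrac49Q(a)+\sigma Q(a)^7=0.\qquad(\ast)$$ There exists $\varepsilon>0$ small such that for any $0\le q_0\le\varepsilon$, $(\ast)$ admits a unique smooth solution on $[0,\frac12]$ with $Q(0)=q_0$, $Q'(0)=0$. Moreover, $$Q(1/2)=q_0Q_0(1/2)+O(q_0^7),\qquad Q'(1/2)=q_0Q_0'(1/2)+O(q_0^7),$$ where $Q_0(a):=\frac34\big(\varphi_2(a)-\varphi_1(a)\big)$ with $\varphi_1(a)=a^{-1}(1-a)^{\frac23}$, $\varphi_2(a)=a^{-1}(1+a)^{\frac23}$, and the solution extends as a smooth even function to the interval $[-\frac12,\frac12]$.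
   Context: The function $Q_0$ is analytic and even near $a=0$ with $Q_0(0)=1$; $\varphi_1,\varphi_2$ form a fundamental system of the linear part of $(\ast)$. $O(q_0^7)$ denotes a quantity bounded by an absolute constant times $q_0^7$. *)

(* Defs.v *)
From Stdlib Require Import Reals Lra.
From Coquelicot Require Import Coquelicot.
Open Scope R_scope.

Definition has_deriv_on (a b : R) (f f' : R -> R) : Prop :=
  forall x, a <= x <= b ->
  forall eps, 0 < eps -> exists delta, 0 < delta /\
    forall y, a <= y <= b -> Rabs (y - x) < delta ->
      Rabs (f y - f x - f' x * (y - x)) <= eps * Rabs (y - x).

Definition smooth_on (a b : R) (f : R -> R) : Prop :=
  exists F : nat -> R -> R,
    (forall x, a <= x <= b -> F O x = f x) /\
    forall n, has_deriv_on a b (F n) (F (S n)).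

(* Q is a smooth solution of ( * ) on [0,1/2] with Q(0)=q0, Q'(0)=0;
   the equation is imposed where it makes sense, i.e. for 0 < a <= 1/2. *)
Definition is_solution (sigma q0 : R) (Q : R -> R) : Prop :=
  smooth_on 0 (1/2) Q /\
  exists Q1 Q2 : R -> R,
    has_deriv_on 0 (1/2) Q Q1 /\ has_deriv_on 0 (1/2) Q1 Q2 /\
    Q 0 = q0 /\ Q1 0 = 0 /\
    forall a, 0 < a <= 1/2 ->
      (a ^ 2 - 1) * Q2 a + (8/3 * a - 2 / a) * Q1 a + 4/9 * Q a
        + sigma * Q a ^ 7 = 0.

Definition phi1 (a : R) : R := / a * Rpower (1 - a) (2/3).
Definition phi2 (a : R) : R := / a * Rpower (1 + a) (2/3).
Definition Q0 (a : R) : R := 3/4 * (phi2 a - phi1 a).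

(* Main.v *)
Require Import Defs.
From Stdlib Require Import Reals Lra Psatz Arith.
From Coquelicot Require Import Coquelicot.
Open Scope R_scope.


Definition wcont (a b : R) (f : R -> R) : Prop :=
  forall x, a <= x <= b -> forall e, 0 < e -> exists d, 0 < d /\
    forall y, a <= y <= b -> Rabs (y - x) < d -> Rabs (f y - f x) < e.

Lemma hdo_wcont a b f f' : has_deriv_on a b f f' -> wcont a b f.
Proof.
  intros H x Hx e He.
  destruct (H x Hx 1 Rlt_0_1) as [d [Hd Hy]].
  set (K := Rabs (f' x) + 1).
  assert (HK : 0 < K) by (unfold K; pose proof (Rabs_pos (f' x)); lra).
  exists (Rmin d (e / K)); split.
  { apply Rmin_pos; auto. apply Rdiv_lt_0_compat; lra. }
  intros y Hy1 Hy2.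
  assert (H1 : Rabs (y - x) < d) by (eapply Rlt_le_trans; [apply Hy2| apply Rmin_l]).
  assert (H2 : Rabs (y - x) < e / K) by (eapply Rlt_le_trans; [apply Hy2| apply Rmin_r]).
  specialize (Hy y Hy1 H1).
  assert (Rabs (f y - f x) <= K * Rabs (y - x)).
  { replace (f y - f x) with ((f y - f x - f' x * (y - x)) + f' x * (y - x)) by ring.
    eapply Rle_trans; [apply Rabs_triang|]. rewrite Rabs_mult. unfold K. lra. }
  assert (K * Rabs (y - x) < e).
  { apply (Rmult_lt_compat_l K) in H2; auto.
    replace (K * (e / K)) with e in H2 by (field; lra). lra. }
  lra.
Qed.

Definition clamp (a b x : R) := Rmax a (Rmin b x).

Lemma clamp_in a b x : a <= b -> a <= clamp a b x <= b.
Proof. intros. unfold clamp, Rmax, Rmin. repeat destruct Rle_dec; lra. Qed.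

Lemma clamp_id a b x : a <= x <= b -> clamp a b x = x.
Proof. intros. unfold clamp, Rmax, Rmin. repeat destruct Rle_dec; lra. Qed.

Lemma clamp_lip a b x y : a <= b -> Rabs (clamp a b y - clamp a b x) <= Rabs (y - x).
Proof.
  intros. unfold clamp, Rmax, Rmin. repeat destruct Rle_dec;
  unfold Rabs; repeat destruct Rcase_abs; lra.
Qed.

Lemma clamp_cont a b f : a <= b -> wcont a b f ->
  forall x, continuity_pt (fun y => f (clamp a b y)) x.
Proof.
  intros Hab H x. unfold continuity_pt, continue_in, limit1_in, limit_in; simpl.
  unfold R_dist. intros e He.
  destruct (H (clamp a b x) (clamp_in a b x Hab) e He) as [d [Hd Hy]].
  exists d; split; auto. intros y [_ Hy2].
  apply Hy. apply clamp_in; auto.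
  eapply Rle_lt_trans; [apply clamp_lip; auto| auto].
Qed.

Lemma hdo_interior a b f f' x : has_deriv_on a b f f' -> a < x < b ->
  derivable_pt_lim (fun y => f (clamp a b y)) x (f' x).
Proof.
  intros H Hx eps He.
  assert (Hx' : a <= x <= b) by lra.
  assert (He2 : 0 < eps / 2) by lra.
  destruct (H x Hx' (eps/2) He2) as [d [Hd Hy]].
  assert (Hp : 0 < Rmin d (Rmin (x - a) (b - x))).
  { repeat apply Rmin_pos; lra. }
  exists (mkposreal _ Hp). intros h Hh0 Hh. simpl in Hh.
  assert (h1 : Rabs h < d) by (eapply Rlt_le_trans; [apply Hh| apply Rmin_l]).
  assert (h2 : Rabs h < Rmin (x - a) (b - x)) by (eapply Rlt_le_trans; [apply Hh| apply Rmin_r]).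
  assert (h3 : Rabs h < x - a) by (eapply Rlt_le_trans; [apply h2| apply Rmin_l]).
  assert (h4 : Rabs h < b - x) by (eapply Rlt_le_trans; [apply h2| apply Rmin_r]).
  assert (Hin : a <= x + h <= b).
  { unfold Rabs in *; destruct Rcase_abs; lra. }
  rewrite (clamp_id a b (x+h) Hin), (clamp_id a b x); [|lra].
  specialize (Hy (x + h) Hin). replace (x + h - x) with h in Hy by ring.
  specialize (Hy h1).
  replace ((f (x + h) - f x) / h - f' x) with ((f (x + h) - f x - f' x * h) / h) by (field; auto).
  rewrite Rabs_div; auto.
  assert (0 < Rabs h) by (apply Rabs_pos_lt; auto).
  apply (Rmult_lt_reg_r (Rabs h)); auto.
  replace (Rabs (f (x + h) - f x - f' x * h) / Rabs h * Rabs h) with (Rabs (f (x + h) - f x - f' x * h)) by (field; lra).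
  pose proof (Rabs_pos h). nra.
Qed.

Lemma hdo_mvt a b f f' : a < b -> has_deriv_on a b f f' ->
  exists c, a <= c <= b /\ f b - f a = f' c * (b - a).
Proof.
  intros Hab H.
  destruct (MVT_gen (fun y => f (clamp a b y)) a b f') as [c [Hc Heq]].
  - intros x Hx. rewrite Rmin_left, Rmax_right in Hx by lra.
    apply is_derive_Reals. apply hdo_interior; auto.
  - intros x _. apply clamp_cont; [lra|]. eapply hdo_wcont; eauto.
  - rewrite Rmin_left, Rmax_right in Hc by lra. exists c; split; auto.
    rewrite (clamp_id a b a), (clamp_id a b b) in Heq by lra. auto.
Qed.

Lemma hdo_minus a b f f' g g' : has_deriv_on a b f f' -> has_deriv_on a b g g' ->
  has_deriv_on a b (fun x => f x - g x) (fun x => f' x - g' x).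
Proof.
  intros Hf Hg x Hx eps He.
  destruct (Hf x Hx (eps/2)) as [d1 [Hd1 H1]]; [lra|].
  destruct (Hg x Hx (eps/2)) as [d2 [Hd2 H2]]; [lra|].
  exists (Rmin d1 d2); split; [apply Rmin_pos; auto|].
  intros y Hy Hyx.
  assert (Rabs (y - x) < d1) by (eapply Rlt_le_trans; [apply Hyx| apply Rmin_l]).
  assert (Rabs (y - x) < d2) by (eapply Rlt_le_trans; [apply Hyx| apply Rmin_r]).
  specialize (H1 y Hy H). specialize (H2 y Hy H0).
  replace (f y - g y - (f x - g x) - (f' x - g' x) * (y - x)) with
    ((f y - f x - f' x * (y - x)) - (g y - g x - g' x * (y - x))) by ring.
  eapply Rle_trans; [apply Rabs_triang|]. rewrite Rabs_Ropp. lra.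
Qed.

Lemma hdo_plus a b f f' g g' : has_deriv_on a b f f' -> has_deriv_on a b g g' ->
  has_deriv_on a b (fun x => f x + g x) (fun x => f' x + g' x).
Proof.
  intros Hf Hg x Hx eps He.
  destruct (Hf x Hx (eps/2)) as [d1 [Hd1 H1]]; [lra|].
  destruct (Hg x Hx (eps/2)) as [d2 [Hd2 H2]]; [lra|].
  exists (Rmin d1 d2); split; [apply Rmin_pos; auto|].
  intros y Hy Hyx.
  assert (Rabs (y - x) < d1) by (eapply Rlt_le_trans; [apply Hyx| apply Rmin_l]).
  assert (Rabs (y - x) < d2) by (eapply Rlt_le_trans; [apply Hyx| apply Rmin_r]).
  specialize (H1 y Hy H). specialize (H2 y Hy H0).
  replace (f y + g y - (f x + g x) - (f' x + g' x) * (y - x)) with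
    ((f y - f x - f' x * (y - x)) + (g y - g x - g' x * (y - x))) by ring.
  eapply Rle_trans; [apply Rabs_triang|]. lra.
Qed.

Lemma hdo_ext a b f f' g g' : has_deriv_on a b f f' ->
  (forall x, a <= x <= b -> f x = g x) -> (forall x, a <= x <= b -> f' x = g' x) ->
  has_deriv_on a b g g'.
Proof.
  intros H E E' x Hx eps He. destruct (H x Hx eps He) as [d [Hd H1]].
  exists d; split; auto. intros y Hy Hyx. rewrite <- (E y Hy), <- (E x Hx), <- (E' x Hx). auto.
Qed.

Lemma hdo_restr a b c d f f' : a <= c -> d <= b -> has_deriv_on a b f f' -> has_deriv_on c d f f'.
Proof.
  intros H1 H2 H x Hx eps He. destruct (H x ltac:(lra) eps He) as [e [He' H3]].
  exists e; split; auto. intros y Hy Hyx. apply H3; auto; lra.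
Qed.

Lemma hdo_of_derive a b f f' : (forall x, a <= x <= b -> derivable_pt_lim f x (f' x)) ->
  has_deriv_on a b f f'.
Proof.
  intros H x Hx eps He. destruct (H x Hx eps He) as [d Hd].
  exists d; split; [apply cond_pos|]. intros y Hy Hyx.
  destruct (Req_dec y x) as [->|Hne].
  { replace (f x - f x - f' x * (x - x)) with 0 by ring. rewrite Rminus_eq_0, !Rabs_R0. lra. }
  assert (Hh : y - x <> 0) by lra.
  specialize (Hd (y - x) Hh Hyx). replace (x + (y - x)) with y in Hd by ring.
  replace (f y - f x - f' x * (y - x)) with (((f y - f x) / (y - x) - f' x) * (y - x)) by (field; auto).
  rewrite Rabs_mult. apply Rmult_le_compat_r; [apply Rabs_pos| lra].
Qed.

Lemma hdo_compare a b f f' g g' : a <= b -> has_deriv_on a b f f' -> has_deriv_on a b g g' ->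
  (forall x, a <= x <= b -> f' x <= g' x) -> f b - f a <= g b - g a.
Proof.
  intros Hab Hf Hg Hle. destruct (Req_dec a b) as [->|Hne]; [lra|].
  destruct (hdo_mvt a b _ _ ltac:(lra) (hdo_minus a b f f' g g' Hf Hg)) as [c [Hc Heq]].
  specialize (Hle c Hc). assert ((f' c - g' c) * (b - a) <= 0).
  { apply Rmult_le_0_r; lra. } lra.
Qed.

Lemma hdo_abs_compare a b f f' g g' : a <= b -> has_deriv_on a b f f' -> has_deriv_on a b g g' ->
  (forall x, a <= x <= b -> Rabs (f' x) <= g' x) -> f a = 0 -> Rabs (f b) <= g b - g a.
Proof.
  intros Hab Hf Hg Hle H0.
  assert (A1 : f b - f a <= g b - g a).
  { apply (hdo_compare a b f f' g g'); auto. intros x Hx. specialize (Hle x Hx).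
    pose proof (Rle_abs (f' x)). lra. }
  assert (A2 : (fun x => 0 - f x) b - (fun x => 0 - f x) a <= g b - g a).
  { apply (hdo_compare a b (fun x => 0 - f x) (fun x => 0 - f' x) g g'); auto.
    - apply hdo_minus; auto. intros x Hx e He. exists 1; split; [lra|]. intros.
      replace (0 - 0 - 0 * (y - x)) with 0 by ring. rewrite Rabs_R0. apply Rmult_le_pos; [lra|apply Rabs_pos].
    - intros x Hx. specialize (Hle x Hx). rewrite <- Rabs_Ropp in Hle.
      pose proof (Rle_abs (- f' x)). lra. }
  simpl in A2. unfold Rabs; destruct Rcase_abs; lra.
Qed.

Lemma hdo_unique a b f f1 f2 x : a < b -> has_deriv_on a b f f1 -> has_deriv_on a b f f2 ->
  a <= x <= b -> f1 x = f2 x.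
Proof.
  intros Hab H1 H2 Hx. destruct (Req_dec (f1 x) (f2 x)) as [E|Hne]; auto. exfalso.
  set (dd := Rabs (f1 x - f2 x)). assert (Hdd : 0 < dd) by (apply Rabs_pos_lt; lra).
  destruct (H1 x Hx (dd/4)) as [d1 [Hd1 G1]]; [lra|].
  destruct (H2 x Hx (dd/4)) as [d2 [Hd2 G2]]; [lra|].
  set (t := Rmin (Rmin d1 d2) (b - a) / 2).
  assert (Ht : 0 < t).
  { unfold t. apply Rdiv_lt_0_compat; [|lra]. repeat apply Rmin_pos; lra. }
  assert (Ht1 : t < d1). { unfold t. pose proof (Rmin_l (Rmin d1 d2) (b-a)). pose proof (Rmin_l d1 d2). lra. }
  assert (Ht2 : t < d2). { unfold t. pose proof (Rmin_l (Rmin d1 d2) (b-a)). pose proof (Rmin_r d1 d2). lra. }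
  assert (Ht3 : t <= (b - a)/2). { unfold t. pose proof (Rmin_r (Rmin d1 d2) (b-a)). lra. }
  assert (exists y, a <= y <= b /\ Rabs (y - x) = t) as [y [Hy Hyx]].
  { destruct (Rle_dec (x + t) b).
    - exists (x + t). split; [lra|]. replace (x + t - x) with t by ring. apply Rabs_right; lra.
    - exists (x - t). split; [lra|]. replace (x - t - x) with (- t) by ring. rewrite Rabs_Ropp. apply Rabs_right; lra. }
  specialize (G1 y Hy ltac:(lra)). specialize (G2 y Hy ltac:(lra)).
  assert (Rabs ((f1 x - f2 x) * (y - x)) <= dd / 2 * Rabs (y - x)).
  { replace ((f1 x - f2 x) * (y - x)) with ((f y - f x - f2 x * (y - x)) - (f y - f x - f1 x * (y - x))) by ring.
    eapply Rle_trans; [apply Rabs_triang|]. rewrite Rabs_Ropp. lra. }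
  rewrite Rabs_mult in H. fold dd in H. rewrite Hyx in H. nra.
Qed.

Lemma hdo_mult a b f f' g g' : has_deriv_on a b f f' -> has_deriv_on a b g g' ->
  has_deriv_on a b (fun x => f x * g x) (fun x => f' x * g x + f x * g' x).
Proof.
  intros Hf Hg x Hx eps He.
  set (A := Rabs (g x) + 1). set (B := Rabs (f' x) + 1). set (C := Rabs (f x) + 1).
  assert (HA : 0 < A) by (unfold A; pose proof (Rabs_pos (g x)); lra).
  assert (HB : 0 < B) by (unfold B; pose proof (Rabs_pos (f' x)); lra).
  assert (HC : 0 < C) by (unfold C; pose proof (Rabs_pos (f x)); lra).
  assert (E1 : 0 < eps / (3 * A)) by (apply Rdiv_lt_0_compat; lra).
  assert (E2 : 0 < Rmin 1 (eps / (3 * B))) by (apply Rmin_pos; [lra|apply Rdiv_lt_0_compat; lra]).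
  assert (E3 : 0 < eps / (3 * C)) by (apply Rdiv_lt_0_compat; lra).
  destruct (Hf x Hx _ E1) as [d1 [Hd1 H1]].
  destruct (hdo_wcont a b g g' Hg x Hx _ E2) as [d2 [Hd2 H2]].
  destruct (Hg x Hx _ E3) as [d3 [Hd3 H3]].
  exists (Rmin d1 (Rmin d2 d3)); split; [repeat apply Rmin_pos; auto|].
  intros y Hy Hyx.
  assert (Rabs (y - x) < d1) by (eapply Rlt_le_trans; [apply Hyx| apply Rmin_l]).
  assert (Rabs (y - x) < Rmin d2 d3) by (eapply Rlt_le_trans; [apply Hyx| apply Rmin_r]).
  assert (Rabs (y - x) < d2) by (eapply Rlt_le_trans; [apply H0| apply Rmin_l]).
  assert (Rabs (y - x) < d3) by (eapply Rlt_le_trans; [apply H0| apply Rmin_r]).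
  specialize (H1 y Hy H). specialize (H2 y Hy H4). specialize (H3 y Hy H5).
  assert (G1 : Rabs (g y - g x) < 1) by (eapply Rlt_le_trans; [apply H2|apply Rmin_l]).
  assert (G2 : Rabs (g y - g x) < eps / (3 * B)) by (eapply Rlt_le_trans; [apply H2|apply Rmin_r]).
  assert (Gy : Rabs (g y) <= A).
  { unfold A. replace (g y) with ((g y - g x) + g x) by ring.
    eapply Rle_trans; [apply Rabs_triang|]. lra. }
  replace (f y * g y - f x * g x - (f' x * g x + f x * g' x) * (y - x)) with
    ((f y - f x - f' x * (y - x)) * g y + f' x * ((y - x) * (g y - g x)) + f x * (g y - g x - g' x * (y - x))) by ring.
  set (u := Rabs (y - x)). assert (Hu : 0 <= u) by apply Rabs_pos.
  assert (T1 : Rabs ((f y - f x - f' x * (y - x)) * g y) <= eps / 3 * u).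
  { rewrite Rabs_mult. eapply Rle_trans.
    - apply Rmult_le_compat; [apply Rabs_pos|apply Rabs_pos|apply H1|apply Gy].
    - replace (eps / (3 * A) * Rabs (y - x) * A) with (eps / 3 * u) by (unfold u; field; lra). lra. }
  assert (T2 : Rabs (f' x * ((y - x) * (g y - g x))) <= eps / 3 * u).
  { rewrite !Rabs_mult. fold u.
    assert (Rabs (f' x) <= B) by (unfold B; lra).
    apply Rle_trans with (B * (u * (eps / (3 * B)))).
    - apply Rmult_le_compat; try apply Rabs_pos; auto.
      + apply Rmult_le_pos; auto. apply Rabs_pos.
      + apply Rmult_le_compat_l; auto. lra.
    - replace (B * (u * (eps / (3 * B)))) with (eps / 3 * u) by (field; lra). lra. }
  assert (T3 : Rabs (f x * (g y - g x - g' x * (y - x))) <= eps / 3 * u).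
  { rewrite Rabs_mult.
    assert (Rabs (f x) <= C) by (unfold C; lra).
    apply Rle_trans with (C * (eps / (3 * C) * u)).
    - apply Rmult_le_compat; try apply Rabs_pos; auto.
    - replace (C * (eps / (3 * C) * u)) with (eps / 3 * u) by (field; lra). lra. }
  eapply Rle_trans; [apply Rabs_triang|].
  eapply Rle_trans; [apply Rplus_le_compat_r; apply Rabs_triang|]. lra.
Qed.

Lemma hdo_const a b c : has_deriv_on a b (fun _ => c) (fun _ => 0).
Proof.
  intros x Hx e He. exists 1; split; [lra|]. intros.
  replace (c - c - 0 * (y - x)) with 0 by ring. rewrite Rabs_R0. apply Rmult_le_pos; [lra|apply Rabs_pos].
Qed.


Lemma wcont_id a b : wcont a b (fun s => s).
Proof. intros x Hx e He. exists e. split; auto. Qed.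

Lemma pow_abs_le x B n : Rabs x <= B -> Rabs (x ^ n) <= B ^ n.
Proof. intros. rewrite <- RPow_abs. apply pow_incr. split; auto. apply Rabs_pos. Qed.

Lemma pow7_lip x y B : Rabs x <= B -> Rabs y <= B ->
  Rabs (x ^ 7 - y ^ 7) <= 7 * B ^ 6 * Rabs (x - y).
Proof.
  intros Hx Hy.
  replace (x ^ 7 - y ^ 7) with ((x - y) * (x^6 + x^5*y + x^4*y^2 + x^3*y^3 + x^2*y^4 + x*y^5 + y^6)) by ring.
  rewrite Rabs_mult, Rmult_comm. apply Rmult_le_compat_r; [apply Rabs_pos|].
  assert (HB : 0 <= B) by (pose proof (Rabs_pos x); lra).
  assert (forall i j, (i + j = 6)%nat -> Rabs (x ^ i * y ^ j) <= B ^ 6).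
  { intros i j Hij. rewrite Rabs_mult. replace (B ^ 6) with (B ^ i * B ^ j) by (rewrite <- pow_add, Hij; auto).
    apply Rmult_le_compat; try apply Rabs_pos; apply pow_abs_le; auto. }
  pose proof (H 6 0 eq_refl)%nat as H0. pose proof (H 5 1 eq_refl)%nat as H1. pose proof (H 4 2 eq_refl)%nat as H2.
  pose proof (H 3 3 eq_refl)%nat as H3. pose proof (H 2 4 eq_refl)%nat as H4. pose proof (H 1 5 eq_refl)%nat as H5.
  pose proof (H 0 6 eq_refl)%nat as H6.
  replace (x ^ 6 * y ^ 0) with (x ^ 6) in H0 by ring.
  replace (x ^ 5 * y ^ 1) with (x ^ 5 * y) in H1 by ring.
  replace (x ^ 1 * y ^ 5) with (x * y ^ 5) in H5 by ring.
  replace (x ^ 0 * y ^ 6) with (y ^ 6) in H6 by ring.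
  assert (Hb : forall t, Rabs t <= B ^ 6 -> - B ^ 6 <= t <= B ^ 6).
  { intros t Ht. split; [pose proof (Rle_abs (-t)); rewrite Rabs_Ropp in *; lra | pose proof (Rle_abs t); lra]. }
  apply Hb in H0, H1, H2, H3, H4, H5, H6. apply Rabs_le. lra.
Qed.

Lemma hdo_bounded a b f f' : a <= b -> has_deriv_on a b f f' ->
  exists M, 0 <= M /\ forall x, a <= x <= b -> Rabs (f x) <= M.
Proof.
  intros Hab H.
  destruct (continuity_ab_maj (fun y => Rabs (f (clamp a b y))) a b Hab) as [Mx [HM HMx]].
  { intros c _. apply (continuity_pt_comp (fun y => f (clamp a b y)) Rabs).
    - apply clamp_cont; auto. eapply hdo_wcont; eauto.
    - apply Rcontinuity_abs. }
  exists (Rabs (f (clamp a b Mx))). split; [apply Rabs_pos|].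
  intros x Hx. specialize (HM x Hx). rewrite clamp_id in HM; auto.
Qed.

Lemma hdo_sq a b : has_deriv_on a b (fun s => s ^ 2) (fun s => 2 * s).
Proof. apply hdo_of_derive. intros x _. apply is_derive_Reals. auto_derive; auto. ring. Qed.

Lemma exp_cont_clamp a b l : a <= b -> forall y, continuity_pt (fun y => exp (l * clamp a b y)) y.
Proof.
  intros Hab y. apply (continuity_pt_comp (fun y => l * clamp a b y) exp).
  - apply (continuity_pt_mult (fun _ => l) (fun y => clamp a b y)).
    + apply continuity_pt_const. intros u v; auto.
    + apply (clamp_cont a b (fun s => s) Hab (wcont_id a b)).
  - apply derivable_continuous_pt, derivable_pt_exp.
Qed.

Theorem uniqueness sigma q0 Q P : is_solution sigma q0 Q -> is_solution sigma q0 P ->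
  forall a, 0 <= a <= 1/2 -> P a = Q a.
Proof.
  intros [_ [Q1 [Q2 [HQ1 [HQ2 [HQ0 [HQ10 HQe]]]]]]] [_ [P1 [P2 [HP1 [HP2 [HP0 [HP10 HPe]]]]]]].
  destruct (hdo_bounded 0 (1/2) Q Q1 ltac:(lra) HQ1) as [BQ [HBQ0 HBQ]].
  destruct (hdo_bounded 0 (1/2) P P1 ltac:(lra) HP1) as [BP [HBP0 HBP]].
  set (B := BQ + BP).
  set (L := 4/9 + Rabs sigma * (7 * B ^ 6)).
  assert (HL : 0 <= L).
  { unfold L. pose proof (Rabs_pos sigma). assert (0 <= B ^ 6) by (apply pow_le; unfold B; lra). nra. }
  set (D := fun s => Q s - P s). set (D1 := fun s => Q1 s - P1 s). set (D2 := fun s => Q2 s - P2 s).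
  set (g := fun s => 4/9 * D s + sigma * (Q s ^ 7 - P s ^ 7)).
  assert (Hg : forall s, 0 <= s <= 1/2 -> Rabs (g s) <= L * Rabs (D s)).
  { intros s Hs. unfold g, L.
    assert (Rabs (Q s ^ 7 - P s ^ 7) <= 7 * B ^ 6 * Rabs (D s)).
    { apply pow7_lip; [specialize (HBQ s Hs) | specialize (HBP s Hs)]; unfold B; lra. }
    eapply Rle_trans; [apply Rabs_triang|]. rewrite !Rabs_mult.
    rewrite (Rabs_right (4/9)) by lra.
    pose proof (Rabs_pos sigma). pose proof (Rabs_pos (D s)). nra. }
  assert (HD : has_deriv_on 0 (1/2) D D1) by (apply hdo_minus; auto).
  assert (HD1 : has_deriv_on 0 (1/2) D1 D2) by (apply hdo_minus; auto).
  set (hp := fun s => (2/3 * s ^ 3 * D1 s + s ^ 2 * g s) / (1 - s ^ 2)).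
  assert (Hh : has_deriv_on 0 (1/2) (fun s => s ^ 2 * D1 s) hp).
  { eapply hdo_ext; [apply (hdo_mult _ _ _ _ _ _ (hdo_sq 0 (1/2)) HD1) | intros; reflexivity |].
    intros s Hs. cbv beta. destruct (Req_dec s 0) as [->|Hs0].
    { unfold hp. field_simplify; lra. }
    assert (E : (s ^ 2 - 1) * D2 s + (8/3 * s - 2 / s) * D1 s + g s = 0).
    { specialize (HQe s ltac:(lra)). specialize (HPe s ltac:(lra)).
      unfold D2, D1, g, D. rewrite <- (Rminus_0_r 0). rewrite <- HQe at 1. rewrite <- HPe. ring. }
    unfold hp.
    replace (2 * s * D1 s + s ^ 2 * D2 s) with
      ((2 / 3 * s ^ 3 * D1 s + s ^ 2 * g s) / (1 - s ^ 2) - s ^ 2 * ((s ^ 2 - 1) * D2 s + (8/3 * s - 2 / s) * D1 s + g s) / (1 - s ^ 2)).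
    { rewrite E. field. nra. }
    field. split; [auto| nra]. }
  set (K := 4/3 * (2/3 + L)).
  assert (HK : 0 < K) by (unfold K; lra).
  set (W := fun y => exp (- K * clamp 0 (1/2) y) * Rabs (D1 (clamp 0 (1/2) y))).
  destruct (continuity_ab_maj W 0 (1/2) ltac:(lra)) as [Mx [HM HMx]].
  { intros c _. apply (continuity_pt_mult (fun y => exp (- K * clamp 0 (1/2) y)) (fun y => Rabs (D1 (clamp 0 (1/2) y)))).
    - apply exp_cont_clamp; lra.
    - apply (continuity_pt_comp (fun y => D1 (clamp 0 (1/2) y)) Rabs).
      + apply clamp_cont; [lra|]. eapply hdo_wcont; eauto.
      + apply Rcontinuity_abs. }
  set (m := W Mx).
  assert (Hm0 : 0 <= m).
  { unfold m, W. apply Rmult_le_pos; [left; apply exp_pos| apply Rabs_pos]. }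
  assert (Hbd1 : forall s, 0 <= s <= 1/2 -> Rabs (D1 s) <= m * exp (K * s)).
  { intros s Hs. specialize (HM s Hs). unfold W in HM. rewrite clamp_id in HM by auto. fold m in HM.
    replace (Rabs (D1 s)) with (exp (- K * s) * Rabs (D1 s) * exp (K * s)).
    - apply Rmult_le_compat_r; [left; apply exp_pos| auto].
    - rewrite Rmult_comm, <- Rmult_assoc, <- exp_plus. replace (K * s + - K * s) with 0 by ring.
      rewrite exp_0. ring. }
  assert (Hbd0 : forall t, 0 <= t <= 1/2 -> Rabs (D t) <= m * t * exp (K * t)).
  { intros t Ht.
    assert (A := hdo_abs_compare 0 t D D1 (fun s => m * s * exp (K * s))
       (fun s => m * (exp (K * s) + K * s * exp (K * s))) ltac:(lra)
       (hdo_restr 0 (1/2) 0 t _ _ ltac:(lra) ltac:(lra) HD)).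
    cbv beta in A.
    assert (Z : m * t * exp (K * t) - m * 0 * exp (K * 0) = m * t * exp (K * t)) by ring.
    rewrite Z in A. apply A.
    - apply hdo_of_derive. intros x _. apply is_derive_Reals. auto_derive; auto. ring.
    - intros s Hs. eapply Rle_trans; [apply Hbd1; lra|].
      assert (0 <= K * s * exp (K * s)).
      { apply Rmult_le_pos; [nra| left; apply exp_pos]. }
      nra.
    - unfold D. rewrite HQ0, HP0. ring. }
  assert (Hbdh : forall s, 0 <= s <= 1/2 -> Rabs (hp s) <= K * m * s ^ 3 * exp (K * s)).
  { intros s Hs. unfold hp. set (e := exp (K * s)).
    assert (He : 0 < e) by apply exp_pos.
    pose proof (Hbd1 s Hs) as h1. pose proof (Hbd0 s Hs) as h2. pose proof (Hg s Hs) as h3. fold e in h1, h2.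
    assert (Hden : 3/4 <= 1 - s ^ 2) by nra.
    rewrite Rabs_div by nra. rewrite (Rabs_right (1 - s ^ 2)) by nra.
    apply Rmult_le_reg_r with (1 - s ^ 2); [lra|].
    unfold Rdiv. rewrite Rmult_assoc, Rinv_l, Rmult_1_r by nra.
    assert (N : Rabs (2 / 3 * s ^ 3 * D1 s + s ^ 2 * g s) <= (2/3 + L) * m * s ^ 3 * e).
    { eapply Rle_trans; [apply Rabs_triang|]. rewrite !Rabs_mult.
      rewrite (Rabs_right (2/3)) by lra. rewrite (Rabs_right (s ^ 3)) by (apply Rle_ge, pow_le; lra).
      rewrite (Rabs_right (s ^ 2)) by (apply Rle_ge, pow_le; lra).
      assert (0 <= s ^ 2) by (apply pow_le; lra). assert (0 <= s ^ 3) by (apply pow_le; lra).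
      assert (s ^ 2 * Rabs (g s) <= s ^ 2 * (L * (m * s * e))).
      { apply Rmult_le_compat_l; auto. eapply Rle_trans; [apply h3|]. apply Rmult_le_compat_l; auto. }
      assert (2/3 * s ^ 3 * Rabs (D1 s) <= 2/3 * s ^ 3 * (m * e)).
      { apply Rmult_le_compat_l; auto. nra. }
      replace ((2/3 + L) * m * s ^ 3 * e) with (2/3 * s ^ 3 * (m * e) + s ^ 2 * (L * (m * s * e))) by ring.
      lra. }
    assert (0 <= m * s ^ 3 * e).
    { apply Rmult_le_pos; [apply Rmult_le_pos; auto; apply pow_le; lra| lra]. }
    set (X := m * s ^ 3 * e) in *.
    assert (HY : 0 <= (2/3 + L) * X) by (apply Rmult_le_pos; lra).
    assert (HZ : (2/3 + L) * X <= (2/3 + L) * X * (4/3 * (1 - s ^ 2))).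
    { rewrite <- (Rmult_1_r ((2/3 + L) * X)) at 1. apply Rmult_le_compat_l; lra. }
    replace (K * m * s ^ 3 * e * (1 - s ^ 2)) with ((2/3 + L) * X * (4/3 * (1 - s ^ 2))) by (unfold K, X; ring).
    replace ((2/3 + L) * m * s ^ 3 * e) with ((2/3 + L) * X) in N by (unfold X; ring).
    lra. }
  assert (HW : forall t, 0 <= t <= 1/2 -> W t <= m / 2).
  { intros t Ht. unfold W. rewrite clamp_id by auto.
    destruct (Req_dec t 0) as [->|Ht0].
    { unfold D1. rewrite HQ10, HP10, Rminus_0_r, Rabs_R0, Rmult_0_r. lra. }
    assert (A := hdo_abs_compare 0 t (fun s => s ^ 2 * D1 s) hp (fun s => m * s ^ 3 * exp (K * s))
       (fun s => m * (3 * s ^ 2 * exp (K * s) + K * s ^ 3 * exp (K * s))) ltac:(lra)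
       (hdo_restr 0 (1/2) 0 t _ _ ltac:(lra) ltac:(lra) Hh)).
    cbv beta in A.
    assert (Z : m * t ^ 3 * exp (K * t) - m * 0 ^ 3 * exp (K * 0) = m * t ^ 3 * exp (K * t)) by ring.
    rewrite Z in A.
    assert (A' : Rabs (t ^ 2 * D1 t) <= m * t ^ 3 * exp (K * t)).
    { apply A; [| |ring].
      - apply hdo_of_derive. intros x _. apply is_derive_Reals. auto_derive; auto. ring.
      - intros s Hs. eapply Rle_trans; [apply Hbdh; lra|].
        assert (0 <= 3 * s ^ 2 * exp (K * s)) by (apply Rmult_le_pos; [apply Rmult_le_pos; [lra|apply pow_le; lra]|left; apply exp_pos]).
        nra. }
    rewrite Rabs_mult, (Rabs_right (t ^ 2)) in A' by nra.
    assert (0 < t) by lra.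
    assert (Rabs (D1 t) <= m * t * exp (K * t)).
    { apply Rmult_le_reg_l with (t ^ 2); [nra|]. nra. }
    assert (He : exp (- K * t) * exp (K * t) = 1).
    { rewrite <- exp_plus. replace (- K * t + K * t) with 0 by ring. apply exp_0. }
    assert (0 < exp (- K * t)) by apply exp_pos.
    apply Rle_trans with (exp (- K * t) * (m * t * exp (K * t))).
    - apply Rmult_le_compat_l; lra.
    - replace (exp (- K * t) * (m * t * exp (K * t))) with (m * t * (exp (- K * t) * exp (K * t))) by ring.
      rewrite He. nra. }
  assert (m = 0) by (specialize (HW Mx HMx); fold m in HW; lra).
  intros a Ha. specialize (Hbd0 a Ha). rewrite H, !Rmult_0_l in Hbd0.
  assert (D a = 0) by (pose proof (Rabs_pos (D a)); apply Rabs_eq_0; lra).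
  unfold D in H0. lra.
Qed.


Lemma radius_ge u C K : 0 < K -> (forall n, Rabs (u n) <= C * K ^ n) -> Rbar_le (/ K) (CV_radius u).
Proof.
  intros HK Hu. destruct (CV_radius_bounded u) as [Hub _]. apply Hub.
  exists C. intros n. rewrite Rabs_mult, <- RPow_abs, (Rabs_right (/ K)) by (left; apply Rinv_0_lt_compat; auto).
  apply Rle_trans with (C * K ^ n * (/ K) ^ n).
  - apply Rmult_le_compat_r; [apply pow_le; left; apply Rinv_0_lt_compat; auto| auto].
  - rewrite Rmult_assoc, <- Rpow_mult_distr, Rinv_r, pow1 by lra. lra.
Qed.

Lemma radius_lt u C K x : 0 < K -> (forall n, Rabs (u n) <= C * K ^ n) -> Rabs x < / K ->
  Rbar_lt (Rabs x) (CV_radius u).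
Proof. intros HK Hu Hx. eapply Rbar_lt_le_trans; [|apply (radius_ge u C K HK Hu)]. simpl. auto. Qed.

Lemma PSeries_Series u x : PSeries u x = Series (fun n => u n * x ^ n).
Proof. unfold PSeries. apply Series_ext. intros n. reflexivity. Qed.

Lemma Series_bound u C q : 0 <= q < 1 -> (forall n, Rabs (u n) <= C * q ^ n) -> Rabs (Series u) <= C / (1 - q).
Proof.
  intros Hq Hu.
  assert (Hg : ex_series (fun n => C * q ^ n)).
  { apply (ex_series_scal_l C (fun n => q ^ n)). apply ex_series_geom. rewrite Rabs_right; lra. }
  assert (Ha : ex_series (fun n => Rabs (u n))).
  { apply (@ex_series_le R_AbsRing R_CompleteNormedModule _ (fun n => C * q ^ n)); auto. intros n. unfold norm; simpl. unfold abs; simpl. rewrite Rabs_Rabsolu. auto. }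
  eapply Rle_trans; [apply Series_Rabs; auto|].
  eapply Rle_trans; [apply (Series_le _ (fun n => C * q ^ n)); auto|].
  { intros n; split; [apply Rabs_pos| auto]. }
  rewrite Series_scal_l, Series_geom by (rewrite Rabs_right; lra). unfold Rdiv. lra.
Qed.

Definition w (j : nat) := / (INR j + 1) ^ 2.

Lemma w_pos j : 0 < w j.
Proof. unfold w. apply Rinv_0_lt_compat. pose proof (pos_INR j). nra. Qed.

Lemma w_le1 j : w j <= 1.
Proof. unfold w. pose proof (pos_INR j). rewrite <- Rinv_1. apply Rinv_le_contravar; nra. Qed.

Lemma w_S j : w (S j) = / (INR j + 2) ^ 2.
Proof. unfold w. rewrite S_INR. f_equal. ring. Qed.

Lemma sum_w j : sum_f_R0 w j <= 2 - / (INR j + 1).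
Proof.
  induction j.
  - simpl. unfold w. simpl. lra.
  - rewrite tech5, w_S. rewrite S_INR. pose proof (pos_INR j).
    assert (/ (INR j + 2) ^ 2 <= / (INR j + 1) - / (INR j + 1 + 1)).
    { replace (/ (INR j + 1) - / (INR j + 1 + 1)) with (/ ((INR j + 1) * (INR j + 2))) by (field; lra).
      apply Rinv_le_contravar; nra. }
    lra.
Qed.

Lemma sum_w2 j : sum_f_R0 w j <= 2.
Proof. pose proof (sum_w j). assert (0 < / (INR j + 1)) by (apply Rinv_0_lt_compat; pose proof (pos_INR j); lra). lra. Qed.

Lemma sum_rev f j : sum_f_R0 (fun k => f (j - k)%nat) j = sum_f_R0 f j.
Proof.
  revert f. induction j; intros f.
  - reflexivity.
  - rewrite decomp_sum by lia. rewrite tech5. simpl pred.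
    replace (S j - 0)%nat with (S j) by lia.
    rewrite (sum_eq (fun i => f (S j - S i)%nat) (fun i => f (j - i)%nat)) by (intros; reflexivity).
    rewrite IHj. ring.
Qed.

Lemma w_conv_pt j k : (k <= j)%nat -> w k * w (j - k) <= 2 * w j * (w k + w (j - k)).
Proof.
  intros Hk. unfold w. rewrite minus_INR by auto.
  set (p := INR k + 1). set (q := INR j - INR k + 1).
  assert (Hp : 1 <= p) by (unfold p; pose proof (pos_INR k); lra).
  assert (Hq : 1 <= q) by (unfold q; apply le_INR in Hk; lra).
  replace (INR j + 1) with (p + q - 1) by (unfold p, q; ring).
  replace (2 * / (p + q - 1) ^ 2 * (/ p ^ 2 + / q ^ 2)) with
     ((2 * (p ^ 2 + q ^ 2) / (p + q - 1) ^ 2) * (/ p ^ 2 * / q ^ 2)) by (field; nra).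
  rewrite <- (Rmult_1_l (/ p ^ 2 * / q ^ 2)) at 1.
  apply Rmult_le_compat_r.
  - apply Rmult_le_pos; left; apply Rinv_0_lt_compat; nra.
  - apply Rmult_le_reg_r with ((p + q - 1) ^ 2); [nra|].
    replace (2 * (p ^ 2 + q ^ 2) / (p + q - 1) ^ 2 * (p + q - 1) ^ 2) with (2 * (p ^ 2 + q ^ 2)) by (field; nra). assert (0 <= (p - q) ^ 2) by apply pow2_ge_0. nra.
Qed.

Lemma w_conv j : sum_f_R0 (fun k => w k * w (j - k)) j <= 8 * w j.
Proof.
  eapply Rle_trans; [apply sum_Rle; intros k Hk; apply (w_conv_pt j k Hk)|].
  rewrite (sum_eq _ (fun i => (w i + w (j - i)%nat) * (2 * w j))) by (intros; ring).
  rewrite <- scal_sum. rewrite sum_plus, (sum_rev w j).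
  pose proof (sum_w2 j). pose proof (w_pos j). nra.
Qed.


Lemma conv_bound u v al be : 0 <= al -> 0 <= be ->
  (forall i, Rabs (u i) <= al * 3 ^ i * w i) -> (forall i, Rabs (v i) <= be * 3 ^ i * w i) ->
  forall j, Rabs (PS_mult u v j) <= (8 * al * be) * 3 ^ j * w j.
Proof.
  intros Ha Hb Hu Hv j. unfold PS_mult.
  eapply Rle_trans; [apply sum_f_R0_triangle|].
  eapply Rle_trans; [apply sum_Rle with (Bn := fun k => (w k * w (j - k)%nat) * (al * be * 3 ^ j))|].
  - intros k Hk. rewrite Rabs_mult.
    replace ((w k * w (j - k)%nat) * (al * be * 3 ^ j)) with ((al * 3 ^ k * w k) * (be * 3 ^ (j - k) * w (j - k)%nat)).
    + apply Rmult_le_compat; try apply Rabs_pos; auto.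
    + assert (E : 3 ^ j = 3 ^ k * 3 ^ (j - k)) by (rewrite <- pow_add; f_equal; lia). rewrite E. ring.
  - rewrite <- scal_sum. pose proof (w_conv j).
    assert (0 <= al * be * 3 ^ j) by (apply Rmult_le_pos; [nra| apply pow_le; lra]). nra.
Qed.

Definition pw7 (u : nat -> R) :=
  PS_mult u (PS_mult u (PS_mult u (PS_mult u (PS_mult u (PS_mult u u))))).

Lemma pw7_bound u a : 0 <= a -> (forall i, Rabs (u i) <= a * 3 ^ i * w i) ->
  forall j, Rabs (pw7 u j) <= (8 ^ 6 * a ^ 7) * 3 ^ j * w j.
Proof.
  intros Ha Hu j. unfold pw7.
  assert (H1 := conv_bound u u a a Ha Ha Hu Hu).
  assert (H2 := conv_bound u _ a (8 * a * a) Ha ltac:(nra) Hu H1).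
  assert (0 <= 8 * a * (8 * a * a)) by (repeat apply Rmult_le_pos; lra).
  assert (H3 := conv_bound u _ a _ Ha H Hu H2). clear H.
  assert (0 <= 8 * a * (8 * a * (8 * a * a))) by (repeat apply Rmult_le_pos; lra).
  assert (H4 := conv_bound u _ a _ Ha H Hu H3).
  assert (0 <= 8 * a * (8 * a * (8 * a * (8 * a * a)))) by (repeat apply Rmult_le_pos; lra).
  assert (H5 := conv_bound u _ a _ Ha H0 Hu H4).
  assert (G : 0 <= 8 * a * (8 * a * (8 * a * (8 * a * (8 * a * a))))) by (repeat apply Rmult_le_pos; lra).
  assert (H6 := conv_bound u _ a _ Ha G Hu H5).
  eapply Rle_trans; [apply H6|]. right. ring.
Qed.

Definition Nc (k : nat) := (2 * INR k + 1/3) * (2 * INR k + 4/3).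
Definition Dc (k : nat) := (2 * INR k + 2) * (2 * INR k + 3).

Lemma Nc_pos k : 0 <= Nc k.
Proof. unfold Nc. pose proof (pos_INR k). nra. Qed.
Lemma Dc_pos k : 0 < Dc k.
Proof. unfold Dc. pose proof (pos_INR k). nra. Qed.
Lemma Nc_le_Dc k : Nc k <= Dc k.
Proof. unfold Nc, Dc. pose proof (pos_INR k). nra. Qed.

Lemma key_ineq k : (Nc k + 1) / Dc k * w k <= 3 * w (S k).
Proof.
  rewrite w_S. unfold w, Nc, Dc. pose proof (pos_INR k) as H. set (J := INR k) in *.
  assert (0 < (J + 1) ^ 2) by nra. assert (0 < (J + 2) ^ 2) by nra.
  assert (0 < (2 * J + 2) * (2 * J + 3)) by nra.
  set (P := (2 * J + 2) * (2 * J + 3) * (J + 1) ^ 2 * (J + 2) ^ 2).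
  assert (HP : 0 < P) by (unfold P; repeat apply Rmult_lt_0_compat; lra).
  apply Rmult_le_reg_r with P; auto.
  replace (((2 * J + 1 / 3) * (2 * J + 4 / 3) + 1) / ((2 * J + 2) * (2 * J + 3)) * / (J + 1) ^ 2 * P)
    with ((4 * J ^ 2 + 10/3 * J + 13/9) * (J + 2) ^ 2) by (unfold P; field; lra).
  replace (3 * / (J + 2) ^ 2 * P) with (3 * ((2 * J + 2) * (2 * J + 3) * (J + 1) ^ 2)) by (unfold P; field; lra).
  assert (0 <= J ^ 2) by nra. assert (0 <= J ^ 3) by (apply pow_le; lra). assert (0 <= J ^ 4) by (apply pow_le; lra).
  nra.
Qed.

Definition newval (sg : R) (u : nat -> R) (k : nat) := (Nc k * u k + sg * pw7 u k) / Dc k.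

Fixpoint Bs (sg q0 : R) (n : nat) : nat -> R :=
  match n with
  | O => fun i => if (i =? 0)%nat then q0 else 0
  | S m => fun i => if (i <=? m)%nat then Bs sg q0 m i else newval sg (Bs sg q0 m) m
  end.

Definition bco sg q0 (j : nat) := Bs sg q0 j j.

Lemma PS_mult_pref u u' v v' n : (forall i, (i <= n)%nat -> u i = u' i) ->
  (forall i, (i <= n)%nat -> v i = v' i) -> forall j, (j <= n)%nat -> PS_mult u v j = PS_mult u' v' j.
Proof.
  intros Hu Hv j Hj. unfold PS_mult. apply sum_eq. intros i Hi. rewrite Hu, Hv by lia. auto.
Qed.

Lemma pw7_pref u u' n : (forall i, (i <= n)%nat -> u i = u' i) ->
  forall j, (j <= n)%nat -> pw7 u j = pw7 u' j.
Proof.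
  intros Hu j Hj. unfold pw7.
  apply (PS_mult_pref _ _ _ _ n); auto. intros i1 H1.
  apply (PS_mult_pref _ _ _ _ n); auto. intros i2 H2.
  apply (PS_mult_pref _ _ _ _ n); auto. intros i3 H3.
  apply (PS_mult_pref _ _ _ _ n); auto. intros i4 H4.
  apply (PS_mult_pref _ _ _ _ n); auto. intros i5 H5.
  apply (PS_mult_pref _ _ _ _ n); auto.
Qed.

Lemma Bs_stable sg q0 n i : (i <= n)%nat -> Bs sg q0 n i = bco sg q0 i.
Proof.
  induction n; intros Hi.
  - assert (i = 0)%nat by lia. subst. reflexivity.
  - destruct (Nat.eq_dec i (S n)) as [->|Hne]; [reflexivity|].
    simpl. replace (i <=? n)%nat with true by (symmetry; apply Nat.leb_le; lia). apply IHn. lia.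
Qed.

Lemma bco_0 sg q0 : bco sg q0 0 = q0.
Proof. reflexivity. Qed.

Lemma bco_S sg q0 k : bco sg q0 (S k) = newval sg (bco sg q0) k.
Proof.
  unfold bco at 1.
  change (Bs sg q0 (S k) (S k)) with (if (S k <=? k)%nat then Bs sg q0 k (S k) else newval sg (Bs sg q0 k) k).
  replace (S k <=? k)%nat with false by (symmetry; apply Nat.leb_gt; lia).
  unfold newval. rewrite (Bs_stable sg q0 k k) by lia.
  rewrite (pw7_pref (Bs sg q0 k) (bco sg q0) k); auto.
  intros; apply Bs_stable; auto.
Qed.

Lemma newval_bound sg u k X Y : Rabs sg <= 1 -> 0 <= X -> Rabs (u k) <= X -> Rabs (pw7 u k) <= Y ->
  Rabs (newval sg u k) <= (Nc k * X + Y) / Dc k.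
Proof.
  intros Hs HX Hu Hp. unfold newval. pose proof (Dc_pos k). pose proof (Nc_pos k).
  rewrite Rabs_div by lra. rewrite (Rabs_right (Dc k)) by lra.
  unfold Rdiv. apply Rmult_le_compat_r; [left; apply Rinv_0_lt_compat; auto|].
  eapply Rle_trans; [apply Rabs_triang|]. rewrite !Rabs_mult. rewrite (Rabs_right (Nc k)) by lra.
  pose proof (Rabs_pos sg). pose proof (Rabs_pos (pw7 u k)).
  apply Rplus_le_compat; [apply Rmult_le_compat_l; auto| nra].
Qed.

Lemma bco_bound sg q0 : Rabs sg <= 1 -> 0 <= q0 <= 1/8 ->
  forall j, Rabs (bco sg q0 j) <= q0 * 3 ^ j * w j.
Proof.
  intros Hs Hq.
  assert (forall n j, (j <= n)%nat -> Rabs (bco sg q0 j) <= q0 * 3 ^ j * w j); [|intros j; apply (H j j); lia].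
  induction n; intros j Hj.
  - assert (j = 0)%nat by lia. subst. rewrite bco_0. unfold w. simpl. rewrite Rabs_right by lra. lra.
  - destruct (Nat.eq_dec j (S n)) as [->|Hne]; [|apply IHn; lia].
    set (t := fun i => if (i <=? n)%nat then bco sg q0 i else 0).
    assert (Ht : forall i, Rabs (t i) <= q0 * 3 ^ i * w i).
    { intros i. unfold t. destruct (i <=? n)%nat eqn:E.
      - apply IHn. apply Nat.leb_le; auto.
      - rewrite Rabs_R0. apply Rmult_le_pos; [apply Rmult_le_pos; [lra|apply pow_le; lra]|left; apply w_pos]. }
    assert (Hp : pw7 (bco sg q0) n = pw7 t n).
    { apply (pw7_pref _ _ n); auto. intros i Hi. unfold t. replace (i <=? n)%nat with true; auto. symmetry; apply Nat.leb_le; auto. }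
    rewrite bco_S.
    pose proof (pw7_bound t q0 ltac:(lra) Ht n) as Hpb. rewrite <- Hp in Hpb.
    assert (HX : 0 <= q0 * 3 ^ n * w n) by (apply Rmult_le_pos; [apply Rmult_le_pos; [lra|apply pow_le; lra]|left; apply w_pos]).
    eapply Rle_trans; [apply (newval_bound _ _ _ _ _ Hs HX (IHn n ltac:(lia)) Hpb)|].
    assert (H86 : 8 ^ 6 * q0 ^ 7 <= q0).
    { replace (8 ^ 6 * q0 ^ 7) with (q0 * (8 * q0) ^ 6) by ring.
      assert ((8 * q0) ^ 6 <= 1) by (rewrite <- (pow1 6); apply pow_incr; lra).
      assert (0 <= (8 * q0) ^ 6) by (apply pow_le; lra). nra. }
    pose proof (key_ineq n). pose proof (Dc_pos n). pose proof (Nc_pos n). pose proof (w_pos n).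
    apply Rle_trans with ((Nc n + 1) / Dc n * w n * (q0 * 3 ^ n)).
    + replace ((Nc n + 1) / Dc n * w n * (q0 * 3 ^ n)) with ((Nc n + 1) * (q0 * 3 ^ n * w n) / Dc n) by (field; lra).
      unfold Rdiv. apply Rmult_le_compat_r; [left; apply Rinv_0_lt_compat; auto|].
      assert (0 <= 3 ^ n) by (apply pow_le; lra).
      assert (8 ^ 6 * q0 ^ 7 * 3 ^ n * w n <= q0 * 3 ^ n * w n).
      { apply Rmult_le_compat_r; [lra|]. apply Rmult_le_compat_r; lra. }
      lra.
    + simpl pow. assert (0 <= q0 * 3 ^ n) by (apply Rmult_le_pos; [lra|apply pow_le; lra]). nra.
Qed.

Fixpoint lco (j : nat) : R := match j with O => 1 | S k => Nc k / Dc k * lco k end.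

Lemma diff_bound sg q0 : Rabs sg <= 1 -> 0 <= q0 <= 1/8 ->
  forall j, Rabs (bco sg q0 j - q0 * lco j) <= (8 ^ 6 * q0 ^ 7) * 3 ^ j * w j.
Proof.
  intros Hs Hq. set (M := 8 ^ 6 * q0 ^ 7).
  assert (HM : 0 <= M) by (unfold M; apply Rmult_le_pos; [lra|apply pow_le; lra]).
  induction j.
  - rewrite bco_0. simpl. replace (q0 - q0 * 1) with 0 by ring. rewrite Rabs_R0.
    unfold w. simpl. lra.
  - rewrite bco_S. unfold newval. simpl lco.
    pose proof (pw7_bound (bco sg q0) q0 ltac:(lra) (bco_bound sg q0 Hs Hq) j) as Hpb. fold M in Hpb.
    pose proof (key_ineq j). pose proof (Dc_pos j). pose proof (Nc_pos j). pose proof (w_pos j).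
    replace ((Nc j * bco sg q0 j + sg * pw7 (bco sg q0) j) / Dc j - q0 * (Nc j / Dc j * lco j))
      with ((Nc j * (bco sg q0 j - q0 * lco j) + sg * pw7 (bco sg q0) j) / Dc j) by (field; lra).
    rewrite Rabs_div by lra. rewrite (Rabs_right (Dc j)) by lra.
    assert (N : Rabs (Nc j * (bco sg q0 j - q0 * lco j) + sg * pw7 (bco sg q0) j) <= (Nc j + 1) * (M * 3 ^ j * w j)).
    { eapply Rle_trans; [apply Rabs_triang|]. rewrite !Rabs_mult, (Rabs_right (Nc j)) by lra.
      pose proof (Rabs_pos sg). pose proof (Rabs_pos (pw7 (bco sg q0) j)).
      assert (Rabs sg * Rabs (pw7 (bco sg q0) j) <= M * 3 ^ j * w j) by nra.
      assert (Nc j * Rabs (bco sg q0 j - q0 * lco j) <= Nc j * (M * 3 ^ j * w j)) by (apply Rmult_le_compat_l; auto).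
      lra. }
    apply Rle_trans with ((Nc j + 1) * (M * 3 ^ j * w j) / Dc j).
    + unfold Rdiv. apply Rmult_le_compat_r; [left; apply Rinv_0_lt_compat; auto| auto].
    + replace ((Nc j + 1) * (M * 3 ^ j * w j) / Dc j) with ((Nc j + 1) / Dc j * w j * (M * 3 ^ j)) by (field; lra).
      simpl pow. assert (0 <= M * 3 ^ j) by (apply Rmult_le_pos; [lra|apply pow_le; lra]). nra.
Qed.

Lemma lco_bound j : 0 <= lco j <= 1.
Proof.
  induction j; simpl; [lra|]. pose proof (Dc_pos j). pose proof (Nc_pos j). pose proof (Nc_le_Dc j).
  assert (0 <= Nc j / Dc j <= 1).
  { split; [apply Rdiv_le_0_compat; lra|]. apply Rmult_le_reg_r with (Dc j); auto.
    unfold Rdiv. rewrite Rmult_assoc, Rinv_l by lra. lra. }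
  nra.
Qed.


Lemma rad_w v c x : 0 <= c -> (forall i, Rabs (v i) <= c * 3 ^ i * w i) -> Rabs x < 1/3 ->
  Rbar_lt (Rabs x) (CV_radius v).
Proof.
  intros Hc Hv Hx. apply (radius_lt v c 3); [lra| |lra].
  intros n. eapply Rle_trans; [apply Hv|]. pose proof (w_le1 n). pose proof (w_pos n).
  assert (0 <= c * 3 ^ n) by (apply Rmult_le_pos; [lra|apply pow_le; lra]). nra.
Qed.

Lemma pw7_series u a x : 0 <= a -> (forall i, Rabs (u i) <= a * 3 ^ i * w i) -> Rabs x < 1/3 ->
  PSeries (pw7 u) x = (PSeries u x) ^ 7.
Proof.
  intros Ha Hu Hx. unfold pw7.
  assert (H1 := conv_bound u u a a Ha Ha Hu Hu).
  assert (G1 : 0 <= 8 * a * a) by nra.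
  assert (H2 := conv_bound u _ a _ Ha G1 Hu H1).
  assert (G2 : 0 <= 8 * a * (8 * a * a)) by (repeat apply Rmult_le_pos; lra).
  assert (H3 := conv_bound u _ a _ Ha G2 Hu H2).
  assert (G3 : 0 <= 8 * a * (8 * a * (8 * a * a))) by (repeat apply Rmult_le_pos; lra).
  assert (H4 := conv_bound u _ a _ Ha G3 Hu H3).
  assert (G4 : 0 <= 8 * a * (8 * a * (8 * a * (8 * a * a)))) by (repeat apply Rmult_le_pos; lra).
  assert (H5 := conv_bound u _ a _ Ha G4 Hu H4).
  assert (G5 : 0 <= 8 * a * (8 * a * (8 * a * (8 * a * (8 * a * a))))) by (repeat apply Rmult_le_pos; lra).
  assert (R0 := rad_w u a x Ha Hu Hx).
  rewrite PSeries_mult; auto; [|apply (rad_w _ _ x G5 H5 Hx)].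
  rewrite PSeries_mult; auto; [|apply (rad_w _ _ x G4 H4 Hx)].
  rewrite PSeries_mult; auto; [|apply (rad_w _ _ x G3 H3 Hx)].
  rewrite PSeries_mult; auto; [|apply (rad_w _ _ x G2 H2 Hx)].
  rewrite PSeries_mult; auto; [|apply (rad_w _ _ x G1 H1 Hx)].
  rewrite PSeries_mult; auto. ring.
Qed.

Lemma PS_lin c u v x : ex_pseries u x -> ex_pseries v x ->
  PSeries (fun n => c * u n + v n) x = c * PSeries u x + PSeries v x /\
  ex_pseries (fun n => c * u n + v n) x.
Proof.
  intros Hu Hv.
  assert (Hs : ex_pseries (PS_scal c u) x).
  { apply ex_pseries_scal; auto. unfold mult; simpl. apply Rmult_comm. }
  split.
  - rewrite (PSeries_ext _ (PS_plus (PS_scal c u) v)) by reflexivity.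
    rewrite PSeries_plus, PSeries_scal; auto.
  - apply (ex_pseries_ext (PS_plus (PS_scal c u) v)); [reflexivity|]. apply ex_pseries_plus; auto.
Qed.

Lemma bco_rec sg q0 k : Dc k * bco sg q0 (S k) = Nc k * bco sg q0 k + sg * pw7 (bco sg q0) k.
Proof. rewrite bco_S. unfold newval. pose proof (Dc_pos k). field. lra. Qed.

Lemma Zcoef sg q0 n :
  let b := bco sg q0 in
  4 * PS_incr_1 (PS_incr_1 (PS_derive (PS_derive b))) n +
  (-4 * PS_incr_1 (PS_derive (PS_derive b)) n +
  (22/3 * PS_incr_1 (PS_derive b) n +
  (-6 * PS_derive b n + (4/9 * b n + sg * pw7 b n)))) = 0.
Proof.
  intros b. destruct n as [|[|k]].
  - simpl. unfold PS_derive. pose proof (bco_rec sg q0 0). unfold Nc, Dc in H. simpl in *.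
    change (zero : R) with 0. fold b in H. nra.
  - simpl. unfold PS_derive. pose proof (bco_rec sg q0 1). unfold Nc, Dc in H. fold b in H.
    change (zero : R) with 0. simpl INR in *. simpl in H. nra.
  - unfold PS_incr_1, PS_derive. pose proof (bco_rec sg q0 (S (S k))). unfold Nc, Dc in H. fold b in H.
    rewrite !S_INR in *. nra.
Qed.

Lemma bco_bound3 sg q0 : Rabs sg <= 1 -> 0 <= q0 <= 1/8 -> forall x, Rabs x < 1/3 ->
  Rbar_lt (Rabs x) (CV_radius (bco sg q0)).
Proof. intros Hs Hq x Hx. apply (rad_w _ q0 x); [lra| apply bco_bound; auto| auto]. Qed.

Lemma P_ode sg q0 x : Rabs sg <= 1 -> 0 <= q0 <= 1/8 -> Rabs x < 1/3 ->
  let b := bco sg q0 in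
  4 * x * (x - 1) * PSeries (PS_derive (PS_derive b)) x + (22/3 * x - 6) * PSeries (PS_derive b) x
  + 4/9 * PSeries b x + sg * (PSeries b x) ^ 7 = 0.
Proof.
  intros Hs Hq Hx b.
  assert (R0 : Rbar_lt (Rabs x) (CV_radius b)) by (apply bco_bound3; auto).
  assert (R1 : Rbar_lt (Rabs x) (CV_radius (PS_derive b))) by (rewrite CV_radius_derive; auto).
  assert (R2 : Rbar_lt (Rabs x) (CV_radius (PS_derive (PS_derive b)))) by (rewrite !CV_radius_derive; auto).
  assert (E0 := CV_radius_inside _ _ R0). assert (E1 := CV_radius_inside _ _ R1).
  assert (E2 := CV_radius_inside _ _ R2).
  assert (Ee : ex_pseries (pw7 b) x).
  { apply CV_radius_inside. apply (rad_w _ (8 ^ 6 * q0 ^ 7)); auto.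
    - apply Rmult_le_pos; [lra|apply pow_le; lra].
    - apply pw7_bound; [lra|]. apply bco_bound; auto. }
  rewrite <- (pw7_series b q0 x) by (auto; try lra; apply bco_bound; auto).
  destruct (PS_lin sg (pw7 b) (fun _ => 0) x Ee (ex_pseries_ext _ _ _ (fun _ => eq_refl) (CV_radius_inside _ x ltac:(rewrite CV_radius_const_0; simpl; auto)))) as [L1 X1].
  destruct (PS_lin (4/9) b _ x E0 X1) as [L2 X2].
  destruct (PS_lin (-6) (PS_derive b) _ x E1 X2) as [L3 X3].
  destruct (PS_lin (22/3) (PS_incr_1 (PS_derive b)) _ x (ex_pseries_incr_1 _ _ E1) X3) as [L4 X4].
  destruct (PS_lin (-4) (PS_incr_1 (PS_derive (PS_derive b))) _ x (ex_pseries_incr_1 _ _ E2) X4) as [L5 X5].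
  destruct (PS_lin 4 (PS_incr_1 (PS_incr_1 (PS_derive (PS_derive b)))) _ x
     (ex_pseries_incr_1 _ _ (ex_pseries_incr_1 _ _ E2)) X5) as [L6 X6].
  rewrite PSeries_incr_1 in L6, L4, L5. rewrite PSeries_incr_1 in L6.
  rewrite PSeries_const_0 in L1.
  assert (Z : PSeries (fun n => 4 * PS_incr_1 (PS_incr_1 (PS_derive (PS_derive b))) n +
      (-4 * PS_incr_1 (PS_derive (PS_derive b)) n + (22/3 * PS_incr_1 (PS_derive b) n +
      (-6 * PS_derive b n + (4/9 * b n + (sg * pw7 b n + 0)))))) x = 0).
  { transitivity (PSeries (fun _ => 0) x); [|apply PSeries_const_0]. apply PSeries_ext. intros n. cbv beta. rewrite Rplus_0_r. apply Zcoef. }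
  rewrite L6, L5, L4, L3, L2, L1 in Z. rewrite <- Z. ring.
Qed.


Definition cq sg q0 (n : nat) := if Nat.even n then bco sg q0 (Nat.div2 n) else 0.
Definition Qf sg q0 (a : R) := PSeries (cq sg q0) a.
Definition Ff sg q0 (n : nat) (a : R) := PSeries (Nat.iter n PS_derive (cq sg q0)) a.

Lemma cq_even sg q0 n : cq sg q0 (2 * n) = bco sg q0 n.
Proof. unfold cq. replace (Nat.even (2 * n)) with true by (symmetry; apply Nat.even_spec; exists n; auto).
  rewrite Nat.div2_double. auto. Qed.

Lemma cq_odd sg q0 n : cq sg q0 (2 * n + 1) = 0.
Proof. unfold cq. rewrite Nat.even_odd. auto. Qed.

Lemma cq_bound sg q0 : Rabs sg <= 1 -> 0 <= q0 <= 1/8 -> forall n, Rabs (cq sg q0 n) <= q0 * (7/4) ^ n.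
Proof.
  intros Hs Hq n. destruct (Nat.Even_or_Odd n) as [[m ->]|[m ->]].
  - rewrite cq_even. eapply Rle_trans; [apply bco_bound; auto|].
    pose proof (w_le1 m). pose proof (w_pos m).
    rewrite pow_mult. assert (3 ^ m <= ((7/4) ^ 2) ^ m) by (apply pow_incr; simpl; lra).
    assert (0 <= 3 ^ m) by (apply pow_le; lra). apply Rle_trans with (q0 * 3 ^ m); [|apply Rmult_le_compat_l; lra]. rewrite <- (Rmult_1_r (q0 * 3 ^ m)) at 2. apply Rmult_le_compat_l; [apply Rmult_le_pos; lra|lra].
  - rewrite cq_odd, Rabs_R0. apply Rmult_le_pos; [lra|apply pow_le; lra].
Qed.

Lemma cq_rad sg q0 a : Rabs sg <= 1 -> 0 <= q0 <= 1/8 -> Rabs a < 4/7 -> Rbar_lt (Rabs a) (CV_radius (cq sg q0)).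
Proof. intros. apply (radius_lt _ q0 (7/4)); [lra|apply cq_bound; auto|]. replace (/ (7/4)) with (4/7) by field. auto. Qed.

Lemma iter_rad n c : CV_radius (Nat.iter n PS_derive c) = CV_radius c.
Proof. induction n; simpl; auto. rewrite CV_radius_derive. auto. Qed.

Lemma Ff_deriv sg q0 n a : Rabs sg <= 1 -> 0 <= q0 <= 1/8 -> Rabs a < 4/7 ->
  is_derive (Ff sg q0 n) a (Ff sg q0 (S n) a).
Proof.
  intros Hs Hq Ha. unfold Ff. simpl. apply is_derive_PSeries. rewrite iter_rad. apply cq_rad; auto.
Qed.

Lemma Qf_smooth sg q0 lo hi : Rabs sg <= 1 -> 0 <= q0 <= 1/8 -> -(1/2) <= lo -> hi <= 1/2 -> smooth_on lo hi (Qf sg q0).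
Proof.
  intros Hs Hq Hl Hh. exists (Ff sg q0). split; [intros; reflexivity|].
  intros n. apply hdo_of_derive. intros x Hx. apply is_derive_Reals. apply Ff_deriv; auto.
  unfold Rabs; destruct Rcase_abs; lra.
Qed.

Lemma sq_small a : Rabs a < 4/7 -> Rabs (a ^ 2) < 1/3.
Proof. intros H. rewrite <- RPow_abs. pose proof (Rabs_pos a). nra. Qed.

Lemma Qf_eq sg q0 a : Rabs sg <= 1 -> 0 <= q0 <= 1/8 -> Rabs a < 4/7 ->
  Qf sg q0 a = PSeries (bco sg q0) (a ^ 2).
Proof.
  intros Hs Hq Ha. unfold Qf.
  assert (R := bco_bound3 sg q0 Hs Hq (a ^ 2) (sq_small a Ha)).
  assert (Ee : ex_pseries (fun n => cq sg q0 (2 * n)) (a ^ 2)).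
  { apply (ex_pseries_ext (bco sg q0)); [intros; rewrite cq_even; auto|]. apply CV_radius_inside; auto. }
  assert (Eo : ex_pseries (fun n => cq sg q0 (2 * n + 1)) (a ^ 2)).
  { apply (ex_pseries_ext (fun _ => 0)); [intros; rewrite cq_odd; auto|].
    apply CV_radius_inside. rewrite CV_radius_const_0. simpl; auto. }
  rewrite PSeries_odd_even by auto.
  rewrite (PSeries_ext _ (bco sg q0)) by (intros; apply cq_even).
  rewrite (PSeries_ext (fun n => cq sg q0 (2 * n + 1)) (fun _ => 0)) by (intros; apply cq_odd).
  rewrite PSeries_const_0. ring.
Qed.

Lemma loc_abs y r : Rabs y < r -> locally y (fun z => Rabs z < r).
Proof.
  intros H. assert (Hp : 0 < r - Rabs y) by lra. exists (mkposreal _ Hp). intros z Hz.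
  change (Rabs (z - y) < r - Rabs y) in Hz.
  replace z with ((z - y) + y) by ring. eapply Rle_lt_trans; [apply Rabs_triang|]. lra.
Qed.

Lemma Ff1_eq sg q0 y : Rabs sg <= 1 -> 0 <= q0 <= 1/8 -> Rabs y < 4/7 ->
  Ff sg q0 1 y = 2 * y * PSeries (PS_derive (bco sg q0)) (y ^ 2).
Proof.
  intros Hs Hq Hy.
  assert (D1 := Ff_deriv sg q0 0 y Hs Hq Hy).
  assert (D2 : is_derive (fun z => PSeries (bco sg q0) (z ^ 2)) y (2 * y * PSeries (PS_derive (bco sg q0)) (y ^ 2))).
  { eapply is_derive_ext; [intros; reflexivity|].
    evar (dd : R). replace (2 * y * PSeries (PS_derive (bco sg q0)) (y ^ 2)) with dd.
    - apply (is_derive_comp (PSeries (bco sg q0)) (fun z => z ^ 2)).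
      + apply is_derive_PSeries. apply bco_bound3; auto. apply sq_small; auto.
      + auto_derive; auto.
    - unfold dd. unfold scal; simpl. unfold mult; simpl. ring. }
  apply is_derive_ext_loc with (g := Ff sg q0 0) in D2.
  - apply is_derive_unique in D1. apply is_derive_unique in D2. rewrite <- D1, <- D2. auto.
  - apply (filter_imp (fun z => Rabs z < 4/7)); [|apply loc_abs; auto].
    intros z Hz. unfold Ff. simpl. symmetry. apply Qf_eq; auto.
Qed.

Lemma Ff2_eq sg q0 y : Rabs sg <= 1 -> 0 <= q0 <= 1/8 -> Rabs y < 4/7 ->
  Ff sg q0 2 y = 2 * PSeries (PS_derive (bco sg q0)) (y ^ 2) + 4 * y ^ 2 * PSeries (PS_derive (PS_derive (bco sg q0))) (y ^ 2).
Proof.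
  intros Hs Hq Hy.
  assert (D1 := Ff_deriv sg q0 1 y Hs Hq Hy).
  assert (R1 : Rbar_lt (Rabs (y ^ 2)) (CV_radius (PS_derive (bco sg q0)))).
  { rewrite CV_radius_derive. apply bco_bound3; auto. apply sq_small; auto. }
  assert (D3 : is_derive (fun z => PSeries (PS_derive (bco sg q0)) (z ^ 2)) y
     (2 * y * PSeries (PS_derive (PS_derive (bco sg q0))) (y ^ 2))).
  { evar (dd : R). replace (2 * y * PSeries (PS_derive (PS_derive (bco sg q0))) (y ^ 2)) with dd.
    - apply (is_derive_comp (PSeries (PS_derive (bco sg q0))) (fun z => z ^ 2)).
      + apply is_derive_PSeries. auto.
      + auto_derive; auto.
    - unfold dd. unfold scal; simpl. unfold mult; simpl. ring. }
  assert (D2 : is_derive (fun z => 2 * z * PSeries (PS_derive (bco sg q0)) (z ^ 2)) y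
     (2 * PSeries (PS_derive (bco sg q0)) (y ^ 2) + 4 * y ^ 2 * PSeries (PS_derive (PS_derive (bco sg q0))) (y ^ 2))).
  { evar (dd : R). replace (2 * PSeries (PS_derive (bco sg q0)) (y ^ 2) + 4 * y ^ 2 * PSeries (PS_derive (PS_derive (bco sg q0))) (y ^ 2)) with dd.
    - apply (is_derive_mult (fun z => 2 * z) (fun z => PSeries (PS_derive (bco sg q0)) (z ^ 2)) y 2).
      + auto_derive; auto. ring.
      + exact D3.
      + intros; unfold mult; simpl; ring.
    - unfold dd. unfold plus, mult; simpl. ring. }
  apply is_derive_ext_loc with (g := Ff sg q0 1) in D2.
  - apply is_derive_unique in D1. apply is_derive_unique in D2. rewrite <- D1, <- D2. auto.
  - apply (filter_imp (fun z => Rabs z < 4/7)); [|apply loc_abs; auto].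
    intros z Hz. symmetry. apply Ff1_eq; auto.
Qed.

Lemma Qf_solution sg q0 : Rabs sg <= 1 -> 0 <= q0 <= 1/8 -> is_solution sg q0 (Qf sg q0).
Proof.
  intros Hs Hq. split; [apply Qf_smooth; auto; lra|].
  exists (Ff sg q0 1), (Ff sg q0 2).
  assert (Hin : forall x, 0 <= x <= 1/2 -> Rabs x < 4/7) by (intros; rewrite Rabs_right; lra).
  split; [|split; [|split; [|split]]].
  - apply hdo_of_derive. intros x Hx. apply is_derive_Reals. apply (Ff_deriv sg q0 0); auto.
  - apply hdo_of_derive. intros x Hx. apply is_derive_Reals. apply (Ff_deriv sg q0 1); auto.
  - unfold Qf. rewrite PSeries_0. unfold cq. simpl. reflexivity.
  - unfold Ff. simpl. rewrite PSeries_0. unfold PS_derive, cq. simpl. ring.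
  - intros a Ha. rewrite Ff1_eq, Ff2_eq, Qf_eq by (auto; apply Hin; lra).
    pose proof (P_ode sg q0 (a ^ 2) Hs Hq (sq_small a (Hin a ltac:(lra)))) as E. cbv zeta in E.
    rewrite <- E. field. lra.
Qed.

Lemma Qf_even sg q0 a : Rabs sg <= 1 -> 0 <= q0 <= 1/8 -> Rabs a < 4/7 -> Qf sg q0 (- a) = Qf sg q0 a.
Proof.
  intros Hs Hq Ha. rewrite !Qf_eq; auto; [|rewrite Rabs_Ropp; auto]. f_equal. ring.
Qed.


Fixpoint bin (n : nat) : R := match n with O => 1 | S k => bin k * (2/3 - INR k) / (INR k + 1) end.

Lemma bin_S k : bin (S k) = bin k * (2/3 - INR k) / (INR k + 1).
Proof. reflexivity. Qed.

Lemma bin_bound n : Rabs (bin n) <= 1 * 1 ^ n.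
Proof.
  rewrite pow1, Rmult_1_l. induction n; simpl bin.
  - rewrite Rabs_R1. lra.
  - pose proof (pos_INR n). unfold Rdiv. rewrite !Rabs_mult.
    rewrite (Rabs_right (/ (INR n + 1))) by (left; apply Rinv_0_lt_compat; lra).
    assert (Rabs (2/3 - INR n) * / (INR n + 1) <= 1).
    { apply Rmult_le_reg_r with (INR n + 1); [lra|]. rewrite Rmult_assoc, Rinv_l by lra.
      unfold Rabs; destruct Rcase_abs; lra. }
    assert (0 <= Rabs (2/3 - INR n) * / (INR n + 1)).
    { apply Rmult_le_pos; [apply Rabs_pos| left; apply Rinv_0_lt_compat; lra]. }
    pose proof (Rabs_pos (bin n)). nra.
Qed.

Lemma bin_rad x : Rabs x < 1 -> Rbar_lt (Rabs x) (CV_radius bin).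
Proof. intros. apply (radius_lt _ 1 1); [lra| apply bin_bound| rewrite Rinv_1; auto]. Qed.

Lemma S_ode x : Rabs x < 1 -> (1 + x) * PSeries (PS_derive bin) x = 2/3 * PSeries bin x.
Proof.
  intros Hx.
  assert (R0 := bin_rad x Hx).
  assert (R1 : Rbar_lt (Rabs x) (CV_radius (PS_derive bin))) by (rewrite CV_radius_derive; auto).
  assert (E0 := CV_radius_inside _ _ R0). assert (E1 := CV_radius_inside _ _ R1).
  assert (Ez : ex_pseries (fun _ : nat => 0) x).
  { apply CV_radius_inside. rewrite CV_radius_const_0. simpl; auto. }
  destruct (PS_lin (-2/3) bin (fun _ => 0) x E0 Ez) as [L1 X1].
  destruct (PS_lin 1 (PS_incr_1 (PS_derive bin)) _ x (ex_pseries_incr_1 _ _ E1) X1) as [L2 X2].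
  destruct (PS_lin 1 (PS_derive bin) _ x E1 X2) as [L3 X3].
  rewrite PSeries_incr_1 in L2. rewrite PSeries_const_0 in L1.
  assert (Z : PSeries (fun n => 1 * PS_derive bin n + (1 * PS_incr_1 (PS_derive bin) n + (-2/3 * bin n + 0))) x = 0).
  { transitivity (PSeries (fun _ => 0) x); [|apply PSeries_const_0]. apply PSeries_ext. intros n.
    destruct n as [|k].
    - unfold PS_derive. simpl. change (zero : R) with 0. lra.
    - unfold PS_incr_1, PS_derive. rewrite (bin_S (S k)). rewrite !S_INR. pose proof (pos_INR k). field. lra. }
  rewrite L3, L2, L1 in Z. lra.
Qed.

Lemma Rpower_1_l y : Rpower 1 y = 1.
Proof. unfold Rpower. rewrite ln_1, Rmult_0_r. apply exp_0. Qed.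

Lemma S_eq x : Rabs x < 1 -> PSeries bin x = Rpower (1 + x) (2/3).
Proof.
  intros Hx.
  set (T := fun t => PSeries bin t * Rpower (1 + t) (-2/3)).
  assert (HT : forall t, Rabs t < 1 -> is_derive T t 0).
  { intros t Ht. assert (Hp : 0 < 1 + t) by (unfold Rabs in Ht; destruct Rcase_abs in Ht; lra).
    assert (D1 : is_derive (PSeries bin) t (PSeries (PS_derive bin) t)) by (apply is_derive_PSeries, bin_rad; auto).
    assert (D2 : is_derive (fun u => Rpower (1 + u) (-2/3)) t (-2/3 * Rpower (1 + t) (-2/3 - 1))).
    { evar (dd : R). replace (-2/3 * Rpower (1 + t) (-2/3 - 1)) with dd.
      - apply (is_derive_comp (fun v => Rpower v (-2/3)) (fun u => 1 + u)).
        + apply is_derive_Reals. apply derivable_pt_lim_power. auto.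
        + auto_derive; auto.
      - unfold dd, scal; simpl. unfold mult; simpl. ring. }
    assert (D := is_derive_mult _ _ t _ _ D1 D2 ltac:(intros; unfold mult; simpl; ring)).
    unfold T. replace 0 with (plus (mult (PSeries (PS_derive bin) t) (Rpower (1 + t) (-2/3)))
                                   (mult (PSeries bin t) (-2/3 * Rpower (1 + t) (-2/3 - 1)))); auto.
    unfold plus, mult; simpl.
    assert (E : Rpower (1 + t) (-2/3) = Rpower (1 + t) (-2/3 - 1) * (1 + t)).
    { rewrite <- (Rpower_1 (1 + t)) at 3 by auto. rewrite <- Rpower_plus. f_equal. ring. }
    rewrite E. pose proof (S_ode t Ht). nra. }
  assert (T0 : T 0 = 1).
  { unfold T. rewrite PSeries_0. simpl. rewrite Rplus_0_r, Rpower_1_l. ring. }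
  assert (Tx : T x = 1).
  { destruct (MVT_gen T 0 x (fun _ => 0)) as [c [Hc Heq]].
    - intros y Hy. apply HT. unfold Rmin, Rmax in Hy. destruct Rle_dec in Hy;
      unfold Rabs in *; repeat destruct Rcase_abs; lra.
    - intros y Hy. apply continuity_pt_filterlim. apply (ex_derive_continuous T).
      eexists. apply HT. unfold Rmin, Rmax in Hy. destruct Rle_dec in Hy;
      unfold Rabs in *; repeat destruct Rcase_abs; lra.
    - lra. }
  unfold T in Tx. assert (Hp : 0 < 1 + x) by (unfold Rabs in Hx; destruct Rcase_abs in Hx; lra).
  assert (Rpower (1 + x) (-2/3) * Rpower (1 + x) (2/3) = 1).
  { rewrite <- Rpower_plus. replace (-2/3 + 2/3) with 0 by lra. apply Rpower_O; auto. }
  transitivity (PSeries bin x * Rpower (1 + x) (-2 / 3) * Rpower (1 + x) (2 / 3)).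
  - rewrite Rmult_assoc, H. ring.
  - rewrite Tx. ring.
Qed.

Lemma lco_bin j : lco j = 3/2 * bin (2 * j + 1).
Proof.
  induction j.
  - simpl. field.
  - simpl lco. rewrite IHj.
    replace (2 * S j + 1)%nat with (S (S (2 * j + 1))) by lia.
    rewrite (bin_S (S (2 * j + 1))), (bin_S (2 * j + 1)).
    unfold Nc, Dc. rewrite !S_INR, plus_INR, mult_INR. simpl INR.
    pose proof (pos_INR j). field. lra.
Qed.

Lemma Q0_eq a : 0 < a < 4/7 -> Q0 a = PSeries lco (a ^ 2).
Proof.
  intros Ha. unfold Q0, phi1, phi2.
  assert (Ha1 : Rabs a < 1) by (rewrite Rabs_right; lra).
  assert (Ha2 : Rabs (- a) < 1) by (rewrite Rabs_Ropp; auto).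
  assert (Hsq : Rabs (a ^ 2) < 1) by (rewrite Rabs_right; [nra| apply Rle_ge; nra]).
  assert (Ee : ex_pseries (fun n => bin (2 * n)) (a ^ 2)).
  { apply CV_radius_inside. apply (radius_lt _ 1 1); [lra| |rewrite Rinv_1; auto]. intros n; rewrite pow1; pose proof (bin_bound (2 * n)) as Hb; rewrite pow1 in Hb; auto. }
  assert (Eo : ex_pseries (fun n => bin (2 * n + 1)) (a ^ 2)).
  { apply CV_radius_inside. apply (radius_lt _ 1 1); [lra| |rewrite Rinv_1; auto]. intros n; rewrite pow1; pose proof (bin_bound (2 * n + 1)) as Hb; rewrite pow1 in Hb; auto. }
  rewrite <- (S_eq a Ha1). replace (1 - a) with (1 + - a) by ring. rewrite <- (S_eq (- a) Ha2).
  rewrite (PSeries_odd_even bin a) by auto.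
  rewrite (PSeries_odd_even bin (- a)) by (replace ((- a) ^ 2) with (a ^ 2) by ring; auto).
  replace ((- a) ^ 2) with (a ^ 2) by ring.
  rewrite (PSeries_ext lco (PS_scal (3/2) (fun n => bin (2 * n + 1)))) by (intros; rewrite lco_bin; reflexivity).
  rewrite PSeries_scal. field. lra.
Qed.

Lemma lco_rad x : Rabs x < 1 -> Rbar_lt (Rabs x) (CV_radius lco).
Proof.
  intros. apply (radius_lt _ 1 1); [lra| |rewrite Rinv_1; auto].
  intros n. rewrite pow1. pose proof (lco_bound n). rewrite Rabs_right; lra.
Qed.

Lemma DQ0 : Derive Q0 (1/2) = PSeries (PS_derive lco) (1/4).
Proof.
  apply is_derive_unique.
  assert (D : is_derive (fun z => PSeries lco (z ^ 2)) (1/2) (PSeries (PS_derive lco) (1/4))).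
  { evar (dd : R). replace (PSeries (PS_derive lco) (1/4)) with dd.
    - apply (is_derive_comp (PSeries lco) (fun z => z ^ 2)).
      + replace ((1/2) ^ 2) with (1/4) by field. apply is_derive_PSeries. apply lco_rad. rewrite Rabs_right; lra.
      + auto_derive; auto.
    - unfold dd, scal; simpl. unfold mult; simpl. change (1 * ((1 + 1) * (1 / 2 * 1)) * PSeries (PS_derive lco) (1 / 4) = PSeries (PS_derive lco) (1 / 4)). field. }
  apply is_derive_ext_loc with (f := fun z => PSeries lco (z ^ 2)); auto.
  assert (Hp : 0 < 1/20) by lra. exists (mkposreal _ Hp). intros z Hz.
  change (Rabs (z - 1/2) < 1/20) in Hz. symmetry. apply Q0_eq.
  unfold Rabs in Hz; destruct Rcase_abs in Hz; lra.
Qed.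


Lemma est1 sg q0 : Rabs sg <= 1 -> 0 <= q0 <= 1/8 ->
  Rabs (Qf sg q0 (1/2) - q0 * Q0 (1/2)) <= 12 * 8 ^ 6 * q0 ^ 7.
Proof.
  intros Hs Hq. set (M := 8 ^ 6 * q0 ^ 7).
  assert (HM : 0 <= M) by (unfold M; apply Rmult_le_pos; [lra|apply pow_le; lra]).
  rewrite Qf_eq by (auto; rewrite Rabs_right; lra). rewrite Q0_eq by lra.
  replace ((1/2) ^ 2) with (1/4) by field.
  assert (H4 : Rabs (1/4) < 1/3) by (rewrite Rabs_right; lra).
  assert (E0 := CV_radius_inside _ _ (bco_bound3 sg q0 Hs Hq _ H4)).
  assert (E1 := CV_radius_inside _ _ (lco_rad (1/4) ltac:(rewrite Rabs_right; lra))).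
  destruct (PS_lin (- q0) lco (bco sg q0) (1/4) E1 E0) as [L _].
  replace (PSeries (bco sg q0) (1/4) - q0 * PSeries lco (1/4)) with
    (PSeries (fun n => - q0 * lco n + bco sg q0 n) (1/4)) by (rewrite L; ring).
  rewrite PSeries_Series.
  eapply Rle_trans; [apply (Series_bound _ M (3/4)); [lra|]|].
  - intros n. rewrite Rabs_mult, <- RPow_abs, (Rabs_right (1/4)) by lra.
    replace (- q0 * lco n + bco sg q0 n) with (bco sg q0 n - q0 * lco n) by ring.
    pose proof (diff_bound sg q0 Hs Hq n) as Hd. fold M in Hd.
    pose proof (w_le1 n). pose proof (w_pos n).
    assert (0 <= (1/4) ^ n) by (apply pow_le; lra).
    apply Rle_trans with (M * 3 ^ n * w n * (1/4) ^ n).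
    + apply Rmult_le_compat_r; auto.
    + replace ((3/4) ^ n) with (3 ^ n * (1/4) ^ n) by (rewrite <- Rpow_mult_distr; f_equal; field).
      assert (0 <= 3 ^ n) by (apply pow_le; lra).
      assert (0 <= M * 3 ^ n * (1/4) ^ n) by (apply Rmult_le_pos; [apply Rmult_le_pos|]; lra).
      replace (M * 3 ^ n * w n * (1 / 4) ^ n) with (M * 3 ^ n * (1/4) ^ n * w n) by ring.
      replace (M * (3 ^ n * (1 / 4) ^ n)) with (M * 3 ^ n * (1/4) ^ n * 1) by ring.
      apply Rmult_le_compat_l; auto.
  - unfold M in *. replace (8 ^ 6 * q0 ^ 7 / (1 - 3/4)) with (4 * (8 ^ 6 * q0 ^ 7)) by field.
    replace (12 * 8 ^ 6 * q0 ^ 7) with (12 * (8 ^ 6 * q0 ^ 7)) by ring. lra.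
Qed.

Lemma est2 sg q0 Q1 : Rabs sg <= 1 -> 0 <= q0 <= 1/8 -> has_deriv_on 0 (1/2) (Qf sg q0) Q1 ->
  Rabs (Q1 (1/2) - q0 * Derive Q0 (1/2)) <= 12 * 8 ^ 6 * q0 ^ 7.
Proof.
  intros Hs Hq HQ1. set (M := 8 ^ 6 * q0 ^ 7).
  assert (HM : 0 <= M) by (unfold M; apply Rmult_le_pos; [lra|apply pow_le; lra]).
  assert (HF : has_deriv_on 0 (1/2) (Qf sg q0) (Ff sg q0 1)).
  { apply hdo_of_derive. intros x Hx. apply is_derive_Reals. apply (Ff_deriv sg q0 0); auto. rewrite Rabs_right; lra. }
  rewrite (hdo_unique 0 (1/2) _ _ _ (1/2) ltac:(lra) HQ1 HF) by lra.
  rewrite Ff1_eq by (auto; rewrite Rabs_right; lra). rewrite DQ0.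
  replace ((1/2) ^ 2) with (1/4) by field.
  assert (H4 : Rabs (1/4) < 1/3) by (rewrite Rabs_right; lra).
  assert (R0 := bco_bound3 sg q0 Hs Hq _ H4).
  assert (E0 := CV_radius_inside (PS_derive (bco sg q0)) (1/4) ltac:(rewrite CV_radius_derive; auto)).
  assert (E1 := CV_radius_inside (PS_derive lco) (1/4) ltac:(rewrite CV_radius_derive; apply lco_rad; rewrite Rabs_right; lra)).
  destruct (PS_lin (- q0) (PS_derive lco) (PS_derive (bco sg q0)) (1/4) E1 E0) as [L _].
  replace (2 * (1/2) * PSeries (PS_derive (bco sg q0)) (1/4) - q0 * PSeries (PS_derive lco) (1/4)) with
    (PSeries (fun n => - q0 * PS_derive lco n + PS_derive (bco sg q0) n) (1/4)) by (rewrite L; field).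
  rewrite PSeries_Series.
  eapply Rle_trans; [apply (Series_bound _ (3 * M) (3/4)); [lra|]|].
  - intros n. rewrite Rabs_mult, <- RPow_abs, (Rabs_right (1/4)) by lra.
    unfold PS_derive.
    replace (- q0 * (INR (S n) * lco (S n)) + INR (S n) * bco sg q0 (S n)) with
      (INR (S n) * (bco sg q0 (S n) - q0 * lco (S n))) by ring.
    rewrite Rabs_mult, (Rabs_right (INR (S n))) by (apply Rle_ge, pos_INR).
    pose proof (diff_bound sg q0 Hs Hq (S n)) as Hd. fold M in Hd.
    assert (Hw : INR (S n) * w (S n) <= 1).
    { rewrite w_S, S_INR. pose proof (pos_INR n).
      apply Rmult_le_reg_r with ((INR n + 2) ^ 2); [nra|].
      rewrite Rmult_assoc, Rinv_l by nra. nra. }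
    assert (0 <= (1/4) ^ n) by (apply pow_le; lra).
    assert (0 <= INR (S n)) by apply pos_INR.
    apply Rle_trans with (INR (S n) * (M * 3 ^ S n * w (S n)) * (1/4) ^ n).
    + apply Rmult_le_compat_r; auto. apply Rmult_le_compat_l; auto.
    + replace (INR (S n) * (M * 3 ^ S n * w (S n)) * (1 / 4) ^ n) with
        ((3 * M * (3 ^ n * (1/4) ^ n)) * (INR (S n) * w (S n))) by (simpl; ring).
      replace ((3/4) ^ n) with (3 ^ n * (1/4) ^ n) by (rewrite <- Rpow_mult_distr; f_equal; field).
      assert (0 <= 3 ^ n) by (apply pow_le; lra).
      assert (0 <= 3 * M * (3 ^ n * (1/4) ^ n)) by (apply Rmult_le_pos; [|apply Rmult_le_pos]; lra).
      rewrite <- (Rmult_1_r (3 * M * (3 ^ n * (1 / 4) ^ n))) at 2.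
      apply Rmult_le_compat_l; auto.
  - unfold M. replace (3 * (8 ^ 6 * q0 ^ 7) / (1 - 3/4)) with (12 * 8 ^ 6 * q0 ^ 7) by field. lra.
Qed.

Theorem lemma2p1 : forall sigma : R, (sigma = 1 \/ sigma = -1) ->
  exists eps, 0 < eps /\ exists C : R,
  forall q0, 0 <= q0 <= eps ->
    exists Q : R -> R,
      is_solution sigma q0 Q /\
      (forall Q' : R -> R, is_solution sigma q0 Q' ->
         forall a, 0 <= a <= 1/2 -> Q' a = Q a) /\
      Rabs (Q (1/2) - q0 * Q0 (1/2)) <= C * q0 ^ 7 /\
      (forall Q1 : R -> R, has_deriv_on 0 (1/2) Q Q1 ->
         Rabs (Q1 (1/2) - q0 * Derive Q0 (1/2)) <= C * q0 ^ 7) /\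
      (exists Qe : R -> R, smooth_on (-(1/2)) (1/2) Qe /\
         (forall a, -(1/2) <= a <= 1/2 -> Qe (- a) = Qe a) /\
         (forall a, 0 <= a <= 1/2 -> Qe a = Q a)).
Proof.
  intros sigma Hsig.
  assert (Hs : Rabs sigma <= 1) by (destruct Hsig as [->| ->]; [rewrite Rabs_R1| rewrite Rabs_left]; lra).
  exists (1/8). split; [lra|]. exists (12 * 8 ^ 6). intros q0 Hq.
  exists (Qf sigma q0). split; [|split; [|split; [|split]]].
  - apply Qf_solution; auto.
  - intros Q' HQ' a Ha. apply (uniqueness sigma q0 (Qf sigma q0) Q'); auto. apply Qf_solution; auto.
  - apply est1; auto.
  - intros Q1 HQ1. apply (est2 sigma); auto.
  - exists (Qf sigma q0). split; [apply Qf_smooth; auto; lra|]. split; [|auto].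
    intros a Ha. apply Qf_even; auto. unfold Rabs; destruct Rcase_abs; lra.
Qed.
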